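(* Let $M$ be a complete pointed metric space and let $V=\{m_{xy}: x,y\in M,\ x\neq y\}\subset\mathcal F(M)$ be the set of molecules. Then the weak closure of $V$ in $\mathcal F(M)$ is contained in $V\cup\{0\}$.
   Context: A pointed metric space $M$ has a distinguished origin $0$. $\mathrm{Lip}_0(M)$ is the Banach space of real Lipschitz functions on $M$ vanishing at $0$ with the best Lipschitz constant as norm; $\delta(x)\in\mathrm{Lip}_0(M)^*$ is evaluation at $x$, and the Lipschitz free space $\mathcal F(M)$ is the closed linear span of $\delta(M)$ in $\mathrm{Lip}_0(M)^*$, with $\mathcal F(M)^*=\mathrm{Lip}_0(M)$. The molecule is $m_{xy}=(\delta(x)-\delta(y))/d(x,y)$ for $x\neq y$. *)

(* Defs.v *)
From Stdlib Require Import Reals Lra List.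
Open Scope R_scope.

Definition is_metric {T : Type} (d : T -> T -> R) : Prop :=
  (forall x y, 0 <= d x y) /\
  (forall x y, d x y = 0 <-> x = y) /\
  (forall x y, d x y = d y x) /\
  (forall x y z, d x z <= d x y + d y z).

Definition complete_metric {T : Type} (d : T -> T -> R) : Prop :=
  forall u : nat -> T,
    (forall eps, 0 < eps -> exists N, forall m n, (N <= m)%nat -> (N <= n)%nat ->
        d (u m) (u n) < eps) ->
    exists l, forall eps, 0 < eps -> exists N, forall n, (N <= n)%nat -> d (u n) l < eps.

Definition lipschitz_with {T : Type} (d : T -> T -> R) (f : T -> R) (L : R) : Prop :=
  forall x y, Rabs (f x - f y) <= L * d x y.

Definition Lip0 {T : Type} (d : T -> T -> R) (o : T) (f : T -> R) : Prop :=
  f o = 0 /\ exists L, lipschitz_with d f L.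

Definition Lip0_ball {T : Type} (d : T -> T -> R) (o : T) (f : T -> R) : Prop :=
  f o = 0 /\ lipschitz_with d f 1.

(* An element of Lip_0(M)^* is represented by a functional Phi on functions
   T -> R; only its values on Lip_0(M) matter.  It must be linear on Lip_0(M)
   (boundedness follows from membership in F(M) below). *)
Definition linear_on_Lip0 {T : Type} (d : T -> T -> R) (o : T)
  (Phi : (T -> R) -> R) : Prop :=
  forall (a b : R) (f g : T -> R), Lip0 d o f -> Lip0 d o g ->
    Phi (fun t => a * f t + b * g t) = a * Phi f + b * Phi g.

(* Finite linear combination sum_i a_i delta(x_i), evaluated at f. *)
Definition eval_comb {T : Type} (c : list (R * T)) (f : T -> R) : R :=
  fold_right (fun p acc => fst p * f (snd p) + acc) 0 c.

(* Lipschitz free space F(M): the dual-norm closure of span delta(M) in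
   Lip_0(M)^*. *)
Definition in_free_space {T : Type} (d : T -> T -> R) (o : T)
  (Phi : (T -> R) -> R) : Prop :=
  linear_on_Lip0 d o Phi /\
  forall eps, 0 < eps -> exists c : list (R * T),
    forall f, Lip0_ball d o f -> Rabs (Phi f - eval_comb c f) <= eps.

Definition molecule {T : Type} (d : T -> T -> R) (x y : T) : (T -> R) -> R :=
  fun f => (f x - f y) / d x y.

(* Phi lies in the weak closure (sigma(F(M), Lip_0(M))) of the set of
   molecules: every basic weak neighbourhood
   {nu : |<f_i, nu - Phi>| < eps, i = 1..n}, f_i in Lip_0(M), contains a
   molecule. *)
Definition in_weak_closure_of_molecules {T : Type} (d : T -> T -> R) (o : T)
  (Phi : (T -> R) -> R) : Prop :=
  forall (fs : list (T -> R)) (eps : R),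
    Forall (Lip0 d o) fs -> 0 < eps ->
    exists x y, x <> y /\
      Forall (fun f => Rabs (molecule d x y f - Phi f) < eps) fs.

Definition same_functional {T : Type} (d : T -> T -> R) (o : T)
  (Phi Psi : (T -> R) -> R) : Prop :=
  forall f, Lip0 d o f -> Phi f = Psi f.

(* Main.v *)
Require Import Defs.
From Stdlib Require Import Reals List Lra Psatz ClassicalEpsilon Classical FunctionalExtensionality.
Open Scope R_scope.

Section Basics.
Variable T : Type.
Variable d : T -> T -> R.
Hypothesis Hm : is_metric d.

Lemma d_pos x y : 0 <= d x y.
Proof. destruct Hm as [H _]; auto. Qed.
Lemma d_refl x : d x x = 0.
Proof. destruct Hm as [_ [H _]]; apply H; auto. Qed.
Lemma d_sym x y : d x y = d y x.
Proof. destruct Hm as [_ [_ [H _]]]; auto. Qed.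
Lemma d_tri x y z : d x z <= d x y + d y z.
Proof. destruct Hm as [_ [_ [_ H]]]; auto. Qed.
Lemma d_neq x y : x <> y -> 0 < d x y.
Proof.
  intro H. destruct (Rle_lt_or_eq_dec 0 (d x y) (d_pos x y)) as [h|h]; auto.
  exfalso; apply H. destruct Hm as [_ [H2 _]]. apply H2; auto.
Qed.

Lemma lip_weaken f L L' : L <= L' -> lipschitz_with d f L -> lipschitz_with d f L'.
Proof.
  intros HL H x y. specialize (H x y). pose proof (d_pos x y). nra.
Qed.

Lemma lip_abs f L : lipschitz_with d f L -> lipschitz_with d f (Rabs L + 1).
Proof. apply lip_weaken. pose proof (Rle_abs L). lra. Qed.

Lemma lip_const k : lipschitz_with d (fun _ => k) 0.
Proof. intros x y. rewrite Rminus_diag, Rabs_R0. pose proof (d_pos x y); lra. Qed.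

Lemma lip_add f g L1 L2 : lipschitz_with d f L1 -> lipschitz_with d g L2 ->
  lipschitz_with d (fun t => f t + g t) (L1 + L2).
Proof.
  intros H1 H2 x y. specialize (H1 x y). specialize (H2 x y).
  replace (f x + g x - (f y + g y)) with ((f x - f y) + (g x - g y)) by ring.
  pose proof (Rabs_triang (f x - f y) (g x - g y)). lra.
Qed.

Lemma lip_scal f L k : lipschitz_with d f L ->
  lipschitz_with d (fun t => k * f t) (Rabs k * L).
Proof.
  intros H x y. specialize (H x y).
  replace (k * f x - k * f y) with (k * (f x - f y)) by ring.
  rewrite Rabs_mult. pose proof (Rabs_pos k). rewrite Rmult_assoc.
  apply Rmult_le_compat_l; auto.
Qed.

Lemma lip_sub f g L1 L2 : lipschitz_with d f L1 -> lipschitz_with d g L2 ->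
  lipschitz_with d (fun t => f t - g t) (L1 + L2).
Proof.
  intros H1 H2 x y. specialize (H1 x y). specialize (H2 x y).
  replace (f x - g x - (f y - g y)) with ((f x - f y) - (g x - g y)) by ring.
  pose proof (Rabs_triang (f x - f y) (- (g x - g y))) as H. rewrite Rabs_Ropp in H.
  replace (f x - f y + - (g x - g y)) with (f x - f y - (g x - g y)) in H by ring. lra.
Qed.

Lemma lip_dist p : lipschitz_with d (fun t => d t p) 1.
Proof.
  intros x y. rewrite Rmult_1_l. pose proof (d_tri x y p). pose proof (d_tri y x p).
  rewrite (d_sym y x) in H0. apply Rabs_le. lra.
Qed.

Definition lip1 (h : R -> R) := forall a b, Rabs (h a - h b) <= Rabs (a - b).

Lemma lip_comp h f L : lip1 h -> 0 <= L -> lipschitz_with d f L ->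
  lipschitz_with d (fun t => h (f t)) L.
Proof. intros Hh HL H x y. eapply Rle_trans; [apply Hh| apply H]. Qed.

Lemma lip_min f g L : lipschitz_with d f L -> lipschitz_with d g L ->
  lipschitz_with d (fun t => Rmin (f t) (g t)) L.
Proof.
  intros H1 H2 x y. specialize (H1 x y). specialize (H2 x y).
  revert H1 H2. unfold Rmin. destruct (Rle_dec (f x) (g x)); destruct (Rle_dec (f y) (g y));
  unfold Rabs; repeat destruct Rcase_abs; intros; lra.
Qed.

Definition clampT (K z : R) := Rmax (- K) (Rmin K z).
Definition clamp01 (z : R) := Rmax 0 (Rmin 1 z).

Lemma clampT_lip K : 0 <= K -> lip1 (clampT K).
Proof.
  intros HK a b. unfold clampT, Rmax, Rmin.
  repeat destruct Rle_dec; unfold Rabs; repeat destruct Rcase_abs; lra.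
Qed.
Lemma clamp01_lip : lip1 clamp01.
Proof.
  intros a b. unfold clamp01, Rmax, Rmin.
  repeat destruct Rle_dec; unfold Rabs; repeat destruct Rcase_abs; lra.
Qed.
Lemma clampT_bound K z : 0 <= K -> Rabs (clampT K z) <= K.
Proof. intros. unfold clampT, Rmax, Rmin. repeat destruct Rle_dec; unfold Rabs; repeat destruct Rcase_abs; lra. Qed.
Lemma clampT_id K z : Rabs z <= K -> clampT K z = z.
Proof. intros. unfold clampT, Rmax, Rmin. revert H. repeat destruct Rle_dec; unfold Rabs; repeat destruct Rcase_abs; lra. Qed.
Lemma clampT_0 K : 0 <= K -> clampT K 0 = 0.
Proof. intros. apply clampT_id. rewrite Rabs_R0; auto. Qed.
Lemma clamp01_range z : 0 <= clamp01 z <= 1.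
Proof. unfold clamp01, Rmax, Rmin. repeat destruct Rle_dec; lra. Qed.

Lemma lip_mul g psi L K B : 0 <= L -> 0 <= K -> 0 <= B ->
  lipschitz_with d g L -> lipschitz_with d psi K ->
  (forall t, 0 <= psi t <= 1) -> (forall t, psi t <> 0 -> Rabs (g t) <= B) ->
  lipschitz_with d (fun t => g t * psi t) (L + B * K).
Proof.
  intros HL HK HB Hg Hp Hr Hb x y.
  pose proof (d_pos x y).
  destruct (Req_dec (psi x) 0) as [Ex|Ex]; destruct (Req_dec (psi y) 0) as [Ey|Ey].
  - rewrite Ex, Ey. rewrite !Rmult_0_r, Rminus_diag, Rabs_R0. apply Rmult_le_pos; [|lra]. pose proof (Rmult_le_pos B K HB HK). lra.
  - replace (g x * psi x - g y * psi y) with (g y * (psi x - psi y) + psi x * (g x - g y)) by ring.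
    eapply Rle_trans; [apply Rabs_triang|]. rewrite !Rabs_mult.
    specialize (Hb y Ey). specialize (Hp x y). specialize (Hg x y).
    pose proof (Hr x). rewrite (Rabs_right (psi x)) by lra.
    pose proof (Rabs_pos (g y)). pose proof (Rabs_pos (psi x - psi y)). pose proof (Rabs_pos (g x - g y)).
    nra.
  - replace (g x * psi x - g y * psi y) with (g x * (psi x - psi y) + psi y * (g x - g y)) by ring.
    eapply Rle_trans; [apply Rabs_triang|]. rewrite !Rabs_mult.
    specialize (Hb x Ex). specialize (Hp x y). specialize (Hg x y).
    pose proof (Hr y). rewrite (Rabs_right (psi y)) by lra.
    pose proof (Rabs_pos (g x)). pose proof (Rabs_pos (psi x - psi y)). pose proof (Rabs_pos (g x - g y)).
    nra.
  - replace (g x * psi x - g y * psi y) with (g x * (psi x - psi y) + psi y * (g x - g y)) by ring.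
    eapply Rle_trans; [apply Rabs_triang|]. rewrite !Rabs_mult.
    specialize (Hb x Ex). specialize (Hp x y). specialize (Hg x y).
    pose proof (Hr y). rewrite (Rabs_right (psi y)) by lra.
    pose proof (Rabs_pos (g x)). pose proof (Rabs_pos (psi x - psi y)). pose proof (Rabs_pos (g x - g y)).
    nra.
Qed.

End Basics.
Section Phi.
Variable T : Type.
Variable d : T -> T -> R.
Variable o : T.
Hypothesis Hm : is_metric d.
Variable Phi : (T -> R) -> R.
Hypothesis Hlin : linear_on_Lip0 d o Phi.
Hypothesis Happ : forall eps, 0 < eps -> exists c : list (R * T),
    forall f, Lip0_ball d o f -> Rabs (Phi f - eval_comb c f) <= eps.

Implicit Types (c : list (R * T)) (F G f g : T -> R).
Definition pts (c : list (R * T)) := map snd c.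
Definition sumabs (c : list (R * T)) := fold_right (fun p acc => Rabs (fst p) + acc) 0 c.
Definition maxpts (c : list (R * T)) (F : T -> R) :=
  fold_right (fun p acc => Rabs (F (snd p)) + acc) 0 c.

Lemma sumabs_pos c : 0 <= sumabs c.
Proof. induction c; simpl; [lra|]. pose proof (Rabs_pos (fst a)); lra. Qed.
Lemma maxpts_pos c F : 0 <= maxpts c F.
Proof. induction c; simpl; [lra|]. pose proof (Rabs_pos (F (snd a))); lra. Qed.
Lemma maxpts_ge c F s : In s (pts c) -> Rabs (F s) <= maxpts c F.
Proof.
  induction c; simpl; [tauto|]. intros [H|H].
  - subst. pose proof (maxpts_pos c F); lra.
  - pose proof (Rabs_pos (F (snd a))); specialize (IHc H); lra.
Qed.

Lemma ec_scal c F k : eval_comb c (fun t => k * F t) = k * eval_comb c F.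
Proof. induction c; simpl; [ring|]. rewrite IHc; ring. Qed.
Lemma ec_ext c F G : (forall s, In s (pts c) -> F s = G s) -> eval_comb c F = eval_comb c G.
Proof.
  induction c; simpl; auto. intros H. rewrite H by auto. rewrite IHc; auto.
Qed.
Lemma ec_zero c F : (forall s, In s (pts c) -> F s = 0) -> eval_comb c F = 0.
Proof.
  intros H. rewrite (ec_ext c F (fun _ : T => 0)) by auto. clear H.
  induction c; simpl; [auto|]. rewrite IHc; ring.
Qed.
Lemma ec_bound c F B : 0 <= B -> (forall s, In s (pts c) -> Rabs (F s) <= B) ->
  Rabs (eval_comb c F) <= sumabs c * B.
Proof.
  intros HB. induction c; simpl; intros H.
  - rewrite Rabs_R0; lra.
  - eapply Rle_trans; [apply Rabs_triang|]. rewrite Rabs_mult.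
    specialize (IHc (fun s hs => H s (or_intror hs))). specialize (H (snd a) (or_introl eq_refl)).
    pose proof (Rabs_pos (fst a)). nra.
Qed.

Lemma Lip0_zero : Lip0 d o (fun _ => 0).
Proof. split; auto. exists 0. apply lip_const; auto. Qed.
Lemma Lip0_add f g : Lip0 d o f -> Lip0 d o g -> Lip0 d o (fun t => f t + g t).
Proof. intros [f0 [L1 H1]] [g0 [L2 H2]]. split. rewrite f0, g0; ring. exists (L1+L2). apply lip_add; auto. Qed.
Lemma Lip0_sub f g : Lip0 d o f -> Lip0 d o g -> Lip0 d o (fun t => f t - g t).
Proof. intros [f0 [L1 H1]] [g0 [L2 H2]]. split. rewrite f0, g0; ring. exists (L1+L2). apply lip_sub; auto. Qed.
Lemma Lip0_scal f k : Lip0 d o f -> Lip0 d o (fun t => k * f t).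
Proof. intros [f0 [L1 H1]]. split. rewrite f0; ring. exists (Rabs k * L1). apply lip_scal; auto. Qed.

Lemma Phi_scal f k : Lip0 d o f -> Phi (fun t => k * f t) = k * Phi f.
Proof.
  intros Hf. pose proof (Hlin k 0 f f Hf Hf) as H.
  replace (fun t => k * f t + 0 * f t) with (fun t => k * f t) in H.
  rewrite H; ring. apply functional_extensionality; intros; ring.
Qed.
Lemma Phi_add f g : Lip0 d o f -> Lip0 d o g -> Phi (fun t => f t + g t) = Phi f + Phi g.
Proof.
  intros Hf Hg. pose proof (Hlin 1 1 f g Hf Hg) as H.
  replace (fun t => 1 * f t + 1 * g t) with (fun t => f t + g t) in H.
  rewrite H; ring. apply functional_extensionality; intros; ring.
Qed.
Lemma Phi_sub f g : Lip0 d o f -> Lip0 d o g -> Phi (fun t => f t - g t) = Phi f - Phi g.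
Proof.
  intros Hf Hg. pose proof (Hlin 1 (-1) f g Hf Hg) as H.
  replace (fun t => 1 * f t + -1 * g t) with (fun t => f t - g t) in H.
  rewrite H; ring. apply functional_extensionality; intros; ring.
Qed.
Lemma Phi_ext f g : (forall t, f t = g t) -> Phi f = Phi g.
Proof. intros H. f_equal. apply functional_extensionality; auto. Qed.

Lemma Phi_zero : Phi (fun _ => 0) = 0.
Proof.
  rewrite (Phi_ext (fun _ => 0) (fun t => 0 * (fun _ : T => 0) t)) by (intros; simpl; ring).
  rewrite Phi_scal by apply Lip0_zero. ring.
Qed.
Lemma approx delta : 0 < delta -> exists c, forall F K, 0 < K -> F o = 0 ->
  lipschitz_with d F K -> Rabs (Phi F - eval_comb c F) <= delta * K.
Proof.
  intros Hd. destruct (Happ delta Hd) as [c Hc]. exists c. intros F K HK F0 HF.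
  assert (HB : Lip0_ball d o (fun t => / K * F t)).
  { split. rewrite F0; ring. 
    pose proof (lip_scal T d F K (/K) HF) as H.
    rewrite Rabs_right in H by (apply Rle_ge; left; apply Rinv_0_lt_compat; auto).
    rewrite Rinv_l in H by lra. auto. }
  specialize (Hc _ HB). rewrite Phi_scal in Hc by (split; auto; exists K; auto).
  rewrite ec_scal in Hc.
  replace (/ K * Phi F - / K * eval_comb c F) with (/K * (Phi F - eval_comb c F)) in Hc by ring.
  rewrite Rabs_mult, Rabs_right in Hc by (apply Rle_ge; left; apply Rinv_0_lt_compat; auto).
  apply (Rmult_le_compat_l K) in Hc; [|lra].
  rewrite <- Rmult_assoc, Rinv_r in Hc by lra. lra.
Qed.


Definition lives (U : T -> Prop) := exists g, Lip0 d o g /\ (forall t, g t <> 0 -> U t) /\ Phi g <> 0.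

Lemma lives_mono (U V : T -> Prop) : (forall t, U t -> V t) -> lives U -> lives V.
Proof. intros H [g [H1 [H2 H3]]]. exists g; split; [|split]; auto. Qed.

Lemma lives_ne U : lives U -> exists t, U t.
Proof.
  intros [g [H1 [H2 H3]]]. apply NNPP. intro Hn. apply H3.
  rewrite <- Phi_zero. apply Phi_ext. intro t. apply NNPP. intro Hz. apply Hn. exists t; auto.
Qed.

Lemma lip0_K f : Lip0 d o f -> exists K, 0 < K /\ lipschitz_with d f K.
Proof.
  intros [_ [L HL]]. exists (Rabs L + 1). split. pose proof (Rabs_pos L); lra.
  apply lip_abs; auto.
Qed.

Lemma truncate U : lives U -> exists g T0 K, 0 < T0 /\ 0 < K /\ Lip0 d o g /\ lipschitz_with d g K /\
  (forall t, Rabs (g t) <= T0) /\ (forall t, g t <> 0 -> U t) /\ Phi g <> 0.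
Proof.
  intros [g [Hg [Hs Hp]]]. destruct (lip0_K g Hg) as [K [HK HgK]].
  assert (Ha : 0 < Rabs (Phi g)) by (apply Rabs_pos_lt; auto).
  destruct (approx (Rabs (Phi g) / (4 * K))) as [c Hc].
  { apply Rdiv_lt_0_compat; lra. }
  set (T0 := maxpts c g + 1).
  assert (HT0 : 0 < T0) by (unfold T0; pose proof (maxpts_pos c g); lra).
  exists (fun t => clampT T0 (g t)), T0, K.
  assert (Hl : lipschitz_with d (fun t => clampT T0 (g t)) K).
  { apply lip_comp; [apply clampT_lip; lra| lra | auto]. }
  assert (H0 : clampT T0 (g o) = 0) by (destruct Hg as [Hg0 _]; rewrite Hg0; apply clampT_0; lra).
  repeat split; auto.
  - exists K; auto.
  - intros t; apply clampT_bound; lra.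
  - intros t Ht. apply Hs. intro E. apply Ht. rewrite E. apply clampT_0; lra.
  - intro E.
    assert (Eec : eval_comb c (fun t => clampT T0 (g t)) = eval_comb c g).
    { apply ec_ext. intros s Hs'. apply clampT_id. pose proof (maxpts_ge c g s Hs'). unfold T0; lra. }
    pose proof (Hc _ K HK H0 Hl) as H1. destruct Hg as [Hg0 _].
    pose proof (Hc _ K HK Hg0 HgK) as H2. rewrite Eec, E in H1.
    replace (Rabs (Phi g) / (4 * K) * K) with (Rabs (Phi g) / 4) in H1, H2 by (field; lra).
    rewrite Rabs_minus_sym in H1. rewrite Rminus_0_r in H1.
    pose proof (Rabs_triang (Phi g - eval_comb c g) (eval_comb c g)) as H3.
    replace (Phi g - eval_comb c g + eval_comb c g) with (Phi g) in H3 by ring. lra.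
Qed.

Definition cutf (r : R) (S : list T) (t : T) : R :=
  fold_right (fun s acc => Rmin (clamp01 (d t s / r)) acc) 1 S.

Lemma cut_range r S t : 0 <= cutf r S t <= 1.
Proof.
  induction S; simpl; [lra|]. pose proof (clamp01_range (d t a / r)).
  unfold Rmin; destruct Rle_dec; lra.
Qed.

Lemma lip_div_dist s r : 0 < r -> lipschitz_with d (fun t => d t s / r) (/ r).
Proof.
  intros Hr. pose proof (lip_scal T d (fun t => d t s) 1 (/ r) (lip_dist T d Hm s)) as H.
  rewrite Rabs_right, Rmult_1_r in H by (apply Rle_ge; left; apply Rinv_0_lt_compat; auto).
  intros x y. specialize (H x y). unfold Rdiv. rewrite (Rmult_comm (d x s)), (Rmult_comm (d y s)). auto.
Qed.

Lemma cut_lip r S : 0 < r -> lipschitz_with d (cutf r S) (/ r).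
Proof.
  intros Hr. induction S; simpl.
  - apply (lip_weaken T d Hm _ 0 (/r)); [left; apply Rinv_0_lt_compat; auto| apply lip_const; auto].
  - apply lip_min; auto. apply lip_comp; [apply clamp01_lip| left; apply Rinv_0_lt_compat; auto|].
    apply lip_div_dist; auto.
Qed.

Lemma cut_zero r S s : 0 < r -> In s S -> cutf r S s = 0.
Proof.
  intros Hr. induction S; simpl; [tauto|]. intros [E|H].
  - subst. rewrite d_refl by auto. unfold Rdiv; rewrite Rmult_0_l.
    replace (clamp01 0) with 0 by (unfold clamp01, Rmax, Rmin; repeat destruct Rle_dec; lra).
    pose proof (cut_range r S s). unfold Rmin; destruct Rle_dec; lra.
  - rewrite IHS by auto. pose proof (clamp01_range (d s a / r)). unfold Rmin; destruct Rle_dec; lra.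
Qed.

Lemma cut_lt1 r S t : 0 < r -> cutf r S t < 1 -> exists s, In s S /\ d t s < r.
Proof.
  intros Hr. induction S; simpl; [lra|]. intros H.
  assert (clamp01 (d t a / r) < 1 \/ cutf r S t < 1) as [H1|H1].
  { unfold Rmin in H; destruct Rle_dec; [left|right]; lra. }
  - exists a; split; auto. unfold clamp01, Rmax, Rmin in H1.
    assert (d t a / r < 1) by (revert H1; repeat destruct Rle_dec; lra).
    apply (Rmult_lt_compat_r r) in H0; auto. unfold Rdiv in H0.
    rewrite Rmult_assoc, Rinv_l, Rmult_1_r in H0 by lra. lra.
  - destruct (IHS H1) as [s [Hs1 Hs2]]. exists s; auto.
Qed.

Lemma split_fin U r B S : 0 < r -> 0 <= B -> forall G, Lip0 d o G -> (forall t, Rabs (G t) <= B) ->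
  Phi G <> 0 -> (forall t, G t <> 0 -> U t /\ exists s, In s S /\ d t s < r) ->
  exists s, lives (fun t => U t /\ d t s < 2 * r).
Proof.
  intros Hr HB. induction S as [|s S IH]; intros G HG HGb HGp HGs.
  - exfalso. apply HGp. rewrite <- Phi_zero. apply Phi_ext. intro t.
    apply NNPP. intro Hn. destruct (HGs t Hn) as [_ [s [Hs _]]]. destruct Hs.
  - set (chi := fun t => clamp01 (2 - d t s / r)).
    assert (Hchi : lipschitz_with d chi (/ r)).
    { apply lip_comp; [apply clamp01_lip| left; apply Rinv_0_lt_compat; auto|].
      apply (lip_weaken T d Hm _ (0 + /r) (/r)); [lra|]. apply lip_sub; [apply lip_const; auto | apply lip_div_dist; auto]. }
    destruct (lip0_K G HG) as [K [HK HGK]].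
    assert (Hm1 : lipschitz_with d (fun t => G t * chi t) (K + B * / r)).
    { apply lip_mul; auto; try lra. left; apply Rinv_0_lt_compat; auto.
      intro; apply clamp01_range. }
    assert (HL1 : Lip0 d o (fun t => G t * chi t)).
    { split. destruct HG as [G0 _]. rewrite G0; ring. eexists; eauto. }
    assert (HL2 : Lip0 d o (fun t => G t - G t * chi t)) by (apply Lip0_sub; auto).
    destruct (Req_dec (Phi (fun t => G t * chi t)) 0) as [E|E].
    + apply (IH (fun t => G t - G t * chi t)); auto.
      * intro t. replace (G t - G t * chi t) with (G t * (1 - chi t)) by ring.
        rewrite Rabs_mult. pose proof (clamp01_range (2 - d t s / r)). fold (chi t) in H.
        rewrite (Rabs_right (1 - chi t)) by lra. pose proof (HGb t). pose proof (Rabs_pos (G t)). nra.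
      * rewrite Phi_sub, E by auto. lra.
      * intros t Ht. assert (HGt : G t <> 0) by (intro Z; apply Ht; rewrite Z; ring).
        destruct (HGs t HGt) as [HU [s' [Hs' Hd]]]. split; auto.
        destruct Hs' as [Es|Hs']; [|exists s'; auto].
        subst s'. exfalso. apply Ht. unfold chi.
        assert (1 <= 2 - d t s / r).
        { assert (d t s / r < 1). { apply (Rmult_lt_reg_r r); auto. unfold Rdiv.
            rewrite Rmult_assoc, Rinv_l by lra. lra. } lra. }
        replace (clamp01 (2 - d t s / r)) with 1 by (unfold clamp01, Rmax, Rmin; repeat destruct Rle_dec; lra).
        ring.
    + exists s. exists (fun t => G t * chi t). split; [auto|split; [|auto]].
      intros t Ht. split.
      * assert (HGt : G t <> 0) by (intro Z; apply Ht; rewrite Z; ring).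
        destruct (HGs t HGt) as [HU _]. auto.
      *  assert (Hc : chi t <> 0) by (intro Z; apply Ht; rewrite Z; ring).
        unfold chi in Hc.
        assert (0 < 2 - d t s / r).
        { apply Rnot_le_lt. intro Hle. apply Hc. unfold clamp01, Rmax, Rmin; repeat destruct Rle_dec; lra. }
        assert (d t s / r < 2) by lra.
        apply (Rmult_lt_compat_r r) in H0; auto. unfold Rdiv in H0.
        rewrite Rmult_assoc, Rinv_l, Rmult_1_r in H0 by lra. lra.
Qed.

Lemma split U rho : lives U -> 0 < rho -> exists s, lives (fun t => U t /\ d t s < rho).
Proof.
  intros HU Hrho. destruct (truncate U HU) as [g [T0 [K [HT0 [HK [Hg [HgK [Hgb [Hgs Hgp]]]]]]]]].
  set (r := rho / 2).
  assert (Hr : 0 < r) by (unfold r; lra).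
  assert (Ha : 0 < Rabs (Phi g)) by (apply Rabs_pos_lt; auto).
  assert (HKK : 0 < K + T0 * / r).
  { pose proof (Rinv_0_lt_compat r Hr). pose proof (Rmult_lt_0_compat T0 (/r) HT0 H). lra. }
  destruct (approx (Rabs (Phi g) / (2 * (K + T0 * / r)))) as [c Hc].
  { apply Rdiv_lt_0_compat; lra. }
  set (rest := fun t => g t * cutf r (pts c) t).
  assert (Hrl : lipschitz_with d rest (K + T0 * / r)).
  { apply lip_mul; try lra; auto. left; apply Rinv_0_lt_compat; auto. apply cut_lip; auto.
    intro; apply cut_range. }
  assert (Hr0 : rest o = 0) by (unfold rest; destruct Hg as [G0 _]; rewrite G0; ring).
  pose proof (Hc rest _ HKK Hr0 Hrl) as H1.
  rewrite (ec_zero c rest) in H1 by (intros s Hs; unfold rest; rewrite cut_zero by auto; ring).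
  remember (K + T0 * / r) as Q.
  replace (Rabs (Phi g) / (2 * Q) * Q) with (Rabs (Phi g) / 2) in H1 by (field; lra).
  rewrite Rminus_0_r in H1.
  assert (HLr : Lip0 d o rest) by (split; auto; eexists; eauto).
  assert (HG : Lip0 d o (fun t => g t - rest t)) by (apply Lip0_sub; auto).
  replace rho with (2 * r) by (unfold r; field).
  apply (split_fin U r T0 (pts c) Hr (Rlt_le _ _ HT0) (fun t => g t - rest t)); auto.
  - intro t. unfold rest. replace (g t - g t * cutf r (pts c) t) with (g t * (1 - cutf r (pts c) t)) by ring.
    rewrite Rabs_mult. pose proof (cut_range r (pts c) t).
    rewrite (Rabs_right (1 - _)) by lra. pose proof (Hgb t). pose proof (Rabs_pos (g t)). nra.
  - rewrite Phi_sub by auto. intro E. assert (Phi g = Phi rest) by lra.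
    rewrite H in Ha, H1. lra.
  - intros t Ht. unfold rest in Ht.
    assert (g t <> 0) by (intro Z; apply Ht; rewrite Z; ring). split; auto.
    apply cut_lt1; auto. pose proof (cut_range r (pts c) t).
    destruct (Req_dec (cutf r (pts c) t) 1) as [E|E]; [|lra].
    exfalso; apply Ht. rewrite E; ring.
Qed.


Hypothesis Hcomp : complete_metric d.

Definition rad (n : nat) : R := (/ 2) ^ n.
Definition sel (W : T -> Prop) (n : nat) : T :=
  epsilon (inhabits o) (fun s => lives (fun t => W t /\ d t s < rad n)).
Fixpoint Wseq (U : T -> Prop) (n : nat) : T -> Prop :=
  match n with
  | O => U
  | S k => fun t => Wseq U k t /\ d t (sel (Wseq U k) k) < rad k
  end.

Lemma rad_pos n : 0 < rad n.
Proof. unfold rad. apply pow_lt. lra. Qed.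
Lemma rad_S n : rad (S n) = rad n / 2.
Proof. unfold rad. simpl. field. Qed.

Lemma Wseq_lives U : lives U -> forall n, lives (Wseq U n).
Proof.
  intros HU n. induction n; simpl; auto.
  apply (epsilon_spec (inhabits o) (fun s => lives (fun t => Wseq U n t /\ d t s < rad n))).
  apply split; auto. apply rad_pos.
Qed.

Lemma Wseq_sub U n t : Wseq U n t -> U t.
Proof. revert t; induction n; simpl; auto. intros t [H _]; auto. Qed.

Lemma rad_small eps : 0 < eps -> exists N, forall n, (N <= n)%nat -> rad n < eps.
Proof.
  intros He. destruct (pow_lt_1_zero (/2)) with (y := eps) as [N HN]; auto.
  rewrite Rabs_right; lra.
  exists N. intros n Hn. specialize (HN n Hn). rewrite Rabs_right in HN; auto.
  apply Rle_ge; left; apply rad_pos.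
Qed.

Lemma essential U : lives U -> exists p, forall r, 0 < r -> lives (fun t => U t /\ d t p < r).
Proof.
  intros HU. set (s := fun n => sel (Wseq U n) n).
  assert (Hstep : forall n, d (s n) (s (S n)) <= 2 * rad n).
  { intro n. destruct (lives_ne _ (Wseq_lives U HU (S (S n)))) as [t [[_ H1] H2]].
    fold (s n) in H1. fold (s (S n)) in H2. rewrite rad_S in H2.
    pose proof (d_tri T d Hm (s n) t (s (S n))). rewrite (d_sym T d Hm (s n) t) in H.
    pose proof (rad_pos n). lra. }
  assert (Hb : forall n k, d (s n) (s (n + k)%nat) <= 4 * rad n - 4 * rad (n + k)%nat).
  { intros n k. induction k.
    - rewrite Nat.add_0_r, d_refl by auto. lra.
    - rewrite Nat.add_succ_r. pose proof (d_tri T d Hm (s n) (s (n + k)%nat) (s (S (n + k)))).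
      pose proof (Hstep (n + k)%nat). rewrite rad_S. lra. }
  assert (Hb2 : forall n m, (n <= m)%nat -> d (s n) (s m) <= 4 * rad n).
  { intros n m Hnm. replace m with (n + (m - n))%nat by lia. pose proof (Hb n (m - n)%nat).
    pose proof (rad_pos (n + (m - n))%nat). lra. }
  destruct (Hcomp s) as [p Hp].
  { intros eps He. destruct (rad_small (eps / 8)) as [N HN]; [lra|]. exists N. intros m n Hm' Hn'.
    pose proof (HN N (le_n N)). pose proof (Hb2 N m Hm'). pose proof (Hb2 N n Hn').
    pose proof (d_tri T d Hm (s m) (s N) (s n)). rewrite (d_sym T d Hm (s m) (s N)) in H2. lra. }
  exists p. intros r Hr. destruct (rad_small (r / 6)) as [n Hn]; [lra|]. specialize (Hn n (le_n n)).
  destruct (Hp (rad n) (rad_pos n)) as [N HN].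
  specialize (HN (Nat.max n N) (Nat.le_max_r n N)). pose proof (Hb2 n (Nat.max n N) (Nat.le_max_l n N)).
  apply (lives_mono (Wseq U (S n))); [|apply Wseq_lives; auto].
  intros t [H1 H2]. split; [apply (Wseq_sub U n); auto|]. fold (s n) in H2.
  pose proof (d_tri T d Hm t (s n) p). pose proof (d_tri T d Hm (s n) (s (Nat.max n N)) p). lra.
Qed.

Lemma lip_div h r : 0 < r -> lipschitz_with d h 1 -> lipschitz_with d (fun t => h t / r) (/ r).
Proof.
  intros Hr Hh. pose proof (lip_scal T d h 1 (/ r) Hh) as H.
  rewrite Rabs_right, Rmult_1_r in H by (apply Rle_ge; left; apply Rinv_0_lt_compat; auto).
  intros x y. specialize (H x y). unfold Rdiv. rewrite (Rmult_comm (h x)), (Rmult_comm (h y)). auto.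
Qed.

Lemma clamp01_one z : 1 <= z -> clamp01 z = 1.
Proof. intros. unfold clamp01, Rmax, Rmin; repeat destruct Rle_dec; lra. Qed.
Lemma clamp01_zero z : z <= 0 -> clamp01 z = 0.
Proof. intros. unfold clamp01, Rmax, Rmin; repeat destruct Rle_dec; lra. Qed.

Lemma concentrate p : (forall r, 0 < r -> ~ lives (fun t => r <= d t p /\ r <= d t o)) ->
  forall f, Lip0 d o f -> f p = 0 -> Phi f = 0.
Proof.
  intros Hno f Hf Hfp. destruct (Req_dec (Phi f) 0) as [E|E]; auto. exfalso.
  destruct (lip0_K f Hf) as [K [HK HfK]].
  set (a := Rabs (Phi f)). assert (Ha : 0 < a) by (apply Rabs_pos_lt; auto).
  destruct (approx (a / (12 * K))) as [c Hc]. { apply Rdiv_lt_0_compat; lra. }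
  set (A := sumabs c). assert (HA : 0 <= A) by apply sumabs_pos.
  set (r := a / (8 * K * (A + 1))).
  assert (Hr : 0 < r) by (unfold r; apply Rdiv_lt_0_compat; [lra|]; apply Rmult_lt_0_compat; lra).
  set (D := fun t => Rmin (d t p) (d t o)).
  set (psi := fun t => clamp01 (2 - D t / r)).
  assert (HD : lipschitz_with d D 1) by (apply lip_min; apply lip_dist; auto).
  assert (Hpsi : lipschitz_with d psi (/ r)).
  { apply lip_comp; [apply clamp01_lip| left; apply Rinv_0_lt_compat; auto|].
    apply (lip_weaken T d Hm _ (0 + /r) (/r)); [lra|]. apply lip_sub; [apply lip_const; auto | apply lip_div; auto]. }
  destruct Hf as [Hfo HfL].
  assert (Hfb : forall t, Rabs (f t) <= K * D t).
  { intro t. pose proof (HfK t p) as H1. pose proof (HfK t o) as H2. rewrite Hfp, Rminus_0_r in H1.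
    rewrite Hfo, Rminus_0_r in H2. unfold D, Rmin. destruct Rle_dec; auto. }
  assert (Hsupp : forall t, psi t <> 0 -> Rabs (f t) <= 2 * K * r).
  { intros t Ht. assert (D t < 2 * r).
    { apply Rnot_le_lt. intro Hle. apply Ht. unfold psi. apply clamp01_zero.
      assert (2 <= D t / r). { apply (Rmult_le_reg_r r); auto. unfold Rdiv. rewrite Rmult_assoc, Rinv_l by lra. lra. }
      lra. }
    pose proof (Hfb t). nra. }
  set (fpsi := fun t => f t * psi t).
  assert (Hfl : lipschitz_with d fpsi (K + 2 * K * r * / r)).
  { apply lip_mul; auto; try lra; try nra; try (left; apply Rinv_0_lt_compat; auto); try (intro; apply clamp01_range). }
  replace (K + 2 * K * r * / r) with (3 * K) in Hfl by (field; lra).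
  assert (Hf0 : fpsi o = 0) by (unfold fpsi; rewrite Hfo; ring).
  assert (Hfb2 : forall t, Rabs (fpsi t) <= 2 * K * r).
  { intro t. unfold fpsi. destruct (Req_dec (psi t) 0) as [Z|Z].
    - rewrite Z, Rmult_0_r, Rabs_R0. nra.
    - rewrite Rabs_mult. pose proof (clamp01_range (2 - D t / r)). fold (psi t) in H.
      rewrite (Rabs_right (psi t)) by lra. pose proof (Hsupp t Z). pose proof (Rabs_pos (f t)). nra. }
  assert (HLf : Lip0 d o f) by (split; auto).
  assert (HLp : Lip0 d o fpsi) by (split; auto; eexists; eauto).
  assert (Hrest : Phi (fun t => f t - fpsi t) = 0).
  { apply NNPP. intro Hn. apply (Hno r Hr). exists (fun t => f t - fpsi t). split; [apply Lip0_sub; auto|split; auto].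
    intros t Ht. assert (psi t <> 1) by (intro Z; apply Ht; unfold fpsi; rewrite Z; ring).
    assert (r < D t).
    { apply Rnot_le_lt. intro Hle. apply H. unfold psi. apply clamp01_one.
      assert (D t / r <= 1). { apply (Rmult_le_reg_r r); auto. unfold Rdiv. rewrite Rmult_assoc, Rinv_l by lra. lra. }
      lra. }
    unfold D, Rmin in H0. destruct Rle_dec; lra. }
  rewrite Phi_sub in Hrest by auto.
  pose proof (Hc fpsi (3 * K) ltac:(lra) Hf0 Hfl) as H1.
  pose proof (ec_bound c fpsi (2 * K * r) ltac:(nra) (fun s _ => Hfb2 s)) as H2. fold A in H2.
  assert (Phi f = Phi fpsi) by lra. 
  assert (a <= A * (2 * K * r) + a / (12 * K) * (3 * K)).
  { assert (Ea : a = Rabs (Phi fpsi)) by (unfold a; rewrite H; auto). rewrite Ea at 1. pose proof (Rabs_triang (Phi fpsi - eval_comb c fpsi) (eval_comb c fpsi)).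
    replace (Phi fpsi - eval_comb c fpsi + eval_comb c fpsi) with (Phi fpsi) in H0 by ring. lra. }
  replace (a / (12 * K) * (3 * K)) with (a / 4) in H0 by (field; lra).
  assert (A * (2 * K * r) <= a / 4).
  { unfold r. replace (A * (2 * K * (a / (8 * K * (A + 1))))) with (a / 4 * (A / (A + 1))) by (field; lra).
    assert (A / (A + 1) <= 1). { apply (Rmult_le_reg_r (A + 1)); [lra|]. unfold Rdiv. rewrite Rmult_assoc, Rinv_l by lra. lra. }
    nra. }
  lra.
Qed.

Lemma mol_close u1 u2 x y f K rho : 0 < d u1 u2 -> 0 <= K -> lipschitz_with d f K -> 0 < rho ->
  rho <= d u1 u2 / 4 -> d x u1 < rho -> d y u2 < rho ->
  Rabs (molecule d x y f - molecule d u1 u2 f) <=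
  4 * rho * (K * d u1 u2 + Rabs (f u1 - f u2)) / (d u1 u2 * d u1 u2).
Proof.
  intros Hd0 HK Hf Hr Hr4 Hx Hy.
  set (d0 := d u1 u2) in *. set (D := d x y).
  assert (E1 : d0 <= d x u1 + D + d y u2).
  { pose proof (d_tri T d Hm u1 x u2). pose proof (d_tri T d Hm x y u2).
    rewrite (d_sym T d Hm u1 x) in H. unfold d0, D. lra. }
  assert (E2 : D <= d x u1 + d0 + d y u2).
  { pose proof (d_tri T d Hm x u1 y). pose proof (d_tri T d Hm u1 u2 y).
    rewrite (d_sym T d Hm u2 y) in H0. unfold d0, D. lra. }
  assert (HD1 : d0 / 2 <= D) by lra.
  assert (HDp : 0 < D) by lra.
  set (N := f x - f y). set (N0 := f u1 - f u2).
  assert (HN : Rabs (N - N0) <= 2 * K * rho).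
  { unfold N, N0. replace (f x - f y - (f u1 - f u2)) with ((f x - f u1) - (f y - f u2)) by ring.
    pose proof (Hf x u1). pose proof (Hf y u2).
    pose proof (Rabs_triang (f x - f u1) (- (f y - f u2))). rewrite Rabs_Ropp in H1.
    replace (f x - f u1 + - (f y - f u2)) with (f x - f u1 - (f y - f u2)) in H1 by ring.
    nra. }
  unfold molecule. fold D d0 N N0.
  replace (N / D - N0 / d0) with ((N * d0 - N0 * D) * / (D * d0)) by (field; lra).
  assert (HX : Rabs (N * d0 - N0 * D) <= 2 * rho * (K * d0 + Rabs N0)).
  { replace (N * d0 - N0 * D) with ((N - N0) * d0 + N0 * (d0 - D)) by ring.
    eapply Rle_trans; [apply Rabs_triang|]. rewrite !Rabs_mult.
    rewrite (Rabs_right d0) by lra.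
    assert (Rabs (d0 - D) <= 2 * rho) by (apply Rabs_le; lra).
    pose proof (Rabs_pos N0). nra. }
  rewrite Rabs_mult. rewrite (Rabs_right (/ (D * d0))) by (apply Rle_ge; left; apply Rinv_0_lt_compat; nra).
  assert (HI : / (D * d0) <= 2 / (d0 * d0)).
  { apply (Rmult_le_reg_r (D * d0)); [nra|]. rewrite Rinv_l by nra.
    replace (2 / (d0*d0) * (D*d0)) with (2 * D / d0) by (field; lra).
    apply (Rmult_le_reg_r d0); [lra|]. unfold Rdiv. rewrite Rmult_assoc, Rinv_l by lra. lra. }
  pose proof (Rabs_pos (N * d0 - N0 * D)).
  apply Rle_trans with (2 * rho * (K * d0 + Rabs N0) * (2 / (d0 * d0))).
  - apply Rmult_le_compat; auto. left; apply Rinv_0_lt_compat; nra.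
  - right. field. lra.
Qed.

Hypothesis Hcl : in_weak_closure_of_molecules d o Phi.

Lemma abs_cases a b : Rabs a = Rabs b -> a = b \/ a = - b.
Proof. unfold Rabs; repeat destruct Rcase_abs; intros; lra. Qed.

Lemma mol_zero x y g : g x = g y -> molecule d x y g = 0.
Proof. intros E. unfold molecule. rewrite E. unfold Rdiv. ring. Qed.

Lemma loc u1 u2 : u1 <> u2 ->
  (forall rho, 0 < rho -> exists g1 g2, Lip0 d o g1 /\ Lip0 d o g2 /\ Phi g1 <> 0 /\ Phi g2 <> 0 /\
     (forall x y, g1 x <> g1 y -> d x u1 < rho \/ d y u1 < rho) /\
     (forall x y, g2 x <> g2 y -> d x u2 < rho \/ d y u2 < rho)) ->
  forall f, Lip0 d o f -> Rabs (Phi f) = Rabs (molecule d u1 u2 f).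
Proof.
  intros Hne Hg f Hf. apply NNPP. intro Hneq.
  set (gam := Rabs (Rabs (Phi f) - Rabs (molecule d u1 u2 f))).
  assert (Hgam : 0 < gam) by (apply Rabs_pos_lt; lra).
  destruct (lip0_K f Hf) as [K [HK HfK]].
  pose proof (d_neq T d Hm u1 u2 Hne) as Hd0. set (d0 := d u1 u2) in *.
  set (Q := K * d0 + Rabs (f u1 - f u2)).
  assert (HQ : 0 <= Q) by (unfold Q; pose proof (Rabs_pos (f u1 - f u2)); nra).
  set (rho := Rmin (d0 / 4) (gam * (d0 * d0) / (8 * (Q + 1)))).
  assert (Hrho : 0 < rho).
  { unfold rho, Rmin; destruct Rle_dec; [lra|]. apply Rdiv_lt_0_compat; [|lra]. 
    apply Rmult_lt_0_compat; nra. }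
  assert (Hr4 : rho <= d0 / 4) by (unfold rho; apply Rmin_l).
  assert (Hbound : 4 * rho * Q / (d0 * d0) < gam / 2).
  { assert (rho <= gam * (d0 * d0) / (8 * (Q + 1))) by (unfold rho; apply Rmin_r).
    apply Rle_lt_trans with (4 * (gam * (d0 * d0) / (8 * (Q + 1))) * Q / (d0 * d0)).
    - unfold Rdiv. apply Rmult_le_compat_r; [left; apply Rinv_0_lt_compat; nra|]. nra.
    - replace (4 * (gam * (d0 * d0) / (8 * (Q + 1))) * Q / (d0 * d0)) with (gam / 2 * (Q / (Q + 1))) by (field; lra).
      assert (Q / (Q + 1) < 1). { apply (Rmult_lt_reg_r (Q + 1)); [lra|]. unfold Rdiv. rewrite Rmult_assoc, Rinv_l by lra. lra. }
      nra. }
  destruct (Hg rho Hrho) as [g1 [g2 [Hg1 [Hg2 [Hp1 [Hp2 [Hs1 Hs2]]]]]]].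
  set (eps := Rmin (gam / 2) (Rmin (Rabs (Phi g1)) (Rabs (Phi g2)))).
  assert (Heps : 0 < eps).
  { unfold eps. apply Rmin_pos; [lra|]. apply Rmin_pos; apply Rabs_pos_lt; auto. }
  assert (He1 : eps <= gam / 2) by apply Rmin_l.
  assert (He2 : eps <= Rabs (Phi g1)) by (eapply Rle_trans; [apply Rmin_r| apply Rmin_l]).
  assert (He3 : eps <= Rabs (Phi g2)) by (eapply Rle_trans; [apply Rmin_r| apply Rmin_r]).
  assert (HFa : Forall (Lip0 d o) (f :: g1 :: g2 :: nil)) by (apply Forall_cons; [auto|apply Forall_cons; [auto|apply Forall_cons; [auto|apply Forall_nil]]]).
  destruct (Hcl (f :: g1 :: g2 :: nil) eps HFa Heps) as [x [y [Hxy HF]]].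
  pose proof (Forall_inv HF) as Cf. pose proof (Forall_inv (Forall_inv_tail HF)) as C1.
  pose proof (Forall_inv (Forall_inv_tail (Forall_inv_tail HF))) as C2. simpl in Cf, C1, C2.
  assert (N1 : g1 x <> g1 y).
  { intro E. rewrite (mol_zero x y g1 E), Rminus_0_l, Rabs_Ropp in C1. lra. }
  assert (N2 : g2 x <> g2 y).
  { intro E. rewrite (mol_zero x y g2 E), Rminus_0_l, Rabs_Ropp in C2. lra. }
  assert (Hdisj : forall z, d z u1 < rho -> d z u2 < rho -> False).
  { intros z H1 H2. pose proof (d_tri T d Hm u1 z u2). rewrite (d_sym T d Hm u1 z) in H. fold d0 in H. lra. }
  assert (Hcl2 : Rabs (Rabs (molecule d x y f) - Rabs (molecule d u1 u2 f)) < gam / 2).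
  { destruct (Hs1 x y N1) as [A1|A1]; destruct (Hs2 x y N2) as [A2|A2].
    - exfalso; eauto.
    - pose proof (mol_close u1 u2 x y f K rho Hd0 (Rlt_le _ _ HK) HfK Hrho Hr4 A1 A2). fold d0 Q in H.
      eapply Rle_lt_trans; [apply Rabs_triang_inv2|]. 
      eapply Rle_lt_trans; [|apply Hbound]. auto.
    - pose proof (mol_close u1 u2 y x f K rho Hd0 (Rlt_le _ _ HK) HfK Hrho Hr4 A1 A2). fold d0 Q in H.
      assert (molecule d x y f = - molecule d y x f).
      { unfold molecule. rewrite (d_sym T d Hm x y). field. pose proof (d_neq T d Hm y x). intro Z.
        apply Hxy. destruct Hm as [_ [HH _]]. apply HH. rewrite d_sym; auto. }
      rewrite H0, Rabs_Ropp.
      eapply Rle_lt_trans; [apply Rabs_triang_inv2|]. 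
      eapply Rle_lt_trans; [|apply Hbound]. auto.
    - exfalso; eauto. }
  assert (Rabs (Rabs (Phi f) - Rabs (molecule d x y f)) < gam / 2).
  { eapply Rle_lt_trans; [apply Rabs_triang_inv2|]. rewrite Rabs_minus_sym. lra. }
  unfold gam in *. revert H Hcl2.
  generalize (Rabs (Phi f)) (Rabs (molecule d x y f)) (Rabs (molecule d u1 u2 f)). intros a b c H1 H2.
  revert H1 H2. unfold Rabs; repeat destruct Rcase_abs; intros; lra.
Qed.

Lemma sign_lemma (Psi : (T -> R) -> R) :
  (forall f g, Lip0 d o f -> Lip0 d o g -> Psi (fun t => f t + g t) = Psi f + Psi g) ->
  (forall f, Lip0 d o f -> Rabs (Phi f) = Rabs (Psi f)) ->
  (forall f, Lip0 d o f -> Phi f = Psi f) \/ (forall f, Lip0 d o f -> Phi f = - Psi f).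
Proof.
  intros Hadd Habs.
  destruct (classic (exists f0, Lip0 d o f0 /\ Psi f0 <> 0)) as [[f0 [Hf0 Hp0]]|Hn].
  - destruct (abs_cases _ _ (Habs f0 Hf0)) as [E0|E0]; [left|right]; intros f Hf;
      pose proof (Habs _ (Lip0_add f f0 Hf Hf0)) as H; rewrite Phi_add, Hadd in H by auto;
      destruct (abs_cases _ _ H); destruct (abs_cases _ _ (Habs f Hf)); lra.
  - left. intros f Hf. assert (Psi f = 0) by (apply NNPP; intro; apply Hn; eauto).
    pose proof (Habs f Hf). rewrite H, Rabs_R0 in H0. 
    destruct (Req_dec (Phi f) 0) as [Z|Z]; [rewrite Z, H; auto|]. exfalso. pose proof (Rabs_pos_lt _ Z). lra.
Qed.

Lemma mol_add x y : forall f g, Lip0 d o f -> Lip0 d o g ->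
  molecule d x y (fun t => f t + g t) = molecule d x y f + molecule d x y g.
Proof. intros. unfold molecule, Rdiv. ring. Qed.

Lemma mol_neg x y f : - molecule d x y f = molecule d y x f.
Proof. unfold molecule. rewrite (d_sym T d Hm y x). unfold Rdiv. ring. Qed.

Lemma supp_ok (g : T -> R) (P : T -> Prop) : (forall t, g t <> 0 -> P t) ->
  forall x y, g x <> g y -> P x \/ P y.
Proof.
  intros H x y Hxy. destruct (Req_dec (g x) 0) as [Z|Z].
  - right. apply H. rewrite Z in Hxy. auto.
  - left; auto.
Qed.

Lemma finish u1 u2 : u1 <> u2 -> (forall f, Lip0 d o f -> Rabs (Phi f) = Rabs (molecule d u1 u2 f)) ->
  exists x y, x <> y /\ same_functional d o Phi (molecule d x y).
Proof.
  intros Hne H. destruct (sign_lemma (molecule d u1 u2) (mol_add u1 u2) H) as [H1|H1].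
  - exists u1, u2. split; auto.
  - exists u2, u1. split; auto. intros f Hf. rewrite H1 by auto. apply mol_neg.
Qed.

Lemma main_aux : same_functional d o Phi (fun _ => 0) \/
  exists x y, x <> y /\ same_functional d o Phi (molecule d x y).
Proof.
  destruct (classic (exists f, Lip0 d o f /\ Phi f <> 0)) as [[f0 [Hf0 Hp0]]|Hn].
  2: { left. intros f Hf. apply NNPP. intro; apply Hn; eauto. }
  right.
  assert (HL : lives (fun _ => True)) by (exists f0; split; [|split]; auto).
  destruct (essential _ HL) as [p1 Hp1].
  destruct (classic (exists r, 0 < r /\ lives (fun t => r <= d t p1 /\ r <= d t o))) as [[r [Hr HLr]]|Hno].
  - destruct (essential _ HLr) as [p2 Hp2].
    assert (Hne : p1 <> p2).
    { intro E. subst p2. destruct (lives_ne _ (Hp2 (r / 2) ltac:(lra))) as [t [[H1 _] H2]]. lra. }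
    apply (finish p1 p2 Hne). apply loc; auto.
    intros rho Hrho.
    destruct (Hp1 rho Hrho) as [g1 [Hg1 [Hs1 Hq1]]].
    destruct (Hp2 rho Hrho) as [g2 [Hg2 [Hs2 Hq2]]].
    exists g1, g2. split; [auto|split; [auto|split; [auto|split; [auto|split]]]].
    + apply supp_ok. intros t Ht. apply Hs1; auto.
    + apply supp_ok. intros t Ht. apply Hs2; auto.
  - assert (Hno' : forall r, 0 < r -> ~ lives (fun t => r <= d t p1 /\ r <= d t o)).
    { intros r Hr HH. apply Hno; eauto. }
    pose proof (concentrate p1 Hno') as Hc.
    assert (Hfp : f0 p1 <> 0) by (intro Z; apply Hp0; apply Hc; auto).
    assert (Hne : p1 <> o).
    { intro E. apply Hfp. rewrite E. destruct Hf0; auto. }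
    pose proof (d_neq T d Hm p1 o Hne) as Hd1.
    apply (finish p1 o Hne). apply loc; auto.
    intros rho Hrho.
    destruct (Hp1 rho Hrho) as [g1 [Hg1 [Hs1 Hq1]]].
    set (rp := Rmin rho (d p1 o)).
    assert (Hrp : 0 < rp) by (apply Rmin_pos; auto).
    set (g2 := fun t => Rmin (d t o) rp).
    assert (Hg2 : Lip0 d o g2).
    { split. unfold g2. rewrite d_refl by auto. unfold Rmin; destruct Rle_dec; lra.
      exists 1. apply lip_min. apply lip_dist; auto.
      apply (lip_weaken T d Hm _ 0 1); [lra|apply lip_const; auto]. }
    assert (Hg2p : g2 p1 = rp).
    { unfold g2. assert (rp <= d p1 o) by apply Rmin_r. unfold Rmin at 1; destruct Rle_dec; lra. }
    exists g1, g2. split; [auto|split; [auto|split; [auto|split; [|split]]]].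
    + set (k := rp / f0 p1).
      assert (Hh : Phi (fun t => g2 t - k * f0 t) = 0).
      { apply Hc. apply Lip0_sub; auto. apply Lip0_scal; auto. rewrite Hg2p. unfold k. field; auto. }
      rewrite Phi_sub, Phi_scal in Hh by (auto; apply Lip0_scal; auto).
      intro Z. rewrite Z in Hh. assert (k * Phi f0 = 0) by lra.
      apply Rmult_integral in H. destruct H as [H|H]; [|auto].
      unfold k in H. unfold Rdiv in H. apply Rmult_integral in H. destruct H as [H|H]; [lra|].
      apply Rinv_neq_0_compat in Hfp. auto.
    + apply supp_ok. intros t Ht. apply Hs1; auto.
    + intros x y Hxy. apply NNPP. intro Hn2.
      assert (rho <= d x o) by (apply Rnot_lt_le; intro; apply Hn2; auto).
      assert (rho <= d y o) by (apply Rnot_lt_le; intro; apply Hn2; auto).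
      assert (rp <= rho) by apply Rmin_l.
      apply Hxy. unfold g2, Rmin. repeat destruct Rle_dec; lra.
Qed.

End Phi.

Theorem proposition2p13 (T : Type) (d : T -> T -> R) (o : T)
  (Hmetric : is_metric d) (Hcomplete : complete_metric d)
  (Phi : (T -> R) -> R)
  (HF : in_free_space d o Phi)
  (Hcl : in_weak_closure_of_molecules d o Phi) :
  same_functional d o Phi (fun _ => 0) \/
  exists x y, x <> y /\ same_functional d o Phi (molecule d x y).
Proof.
  destruct HF as [Hlin Happ].
  eapply main_aux; eauto.
Qed.
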